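(* Let $\mathbf b_i\in\mathcal B_k$ be an interior point of $P(A)$. Let $\beta_1,\dots,\beta_{R_k}$ be the elements of $\{1/\ell_0,2/\ell_0,\dots,\ell_0/\ell_0\}$ not of the form $1-s_0^{(j)}/\ell_0$ with $\mathbf b_j\in\mathcal B_k$ a boundary point of $P(A)$ (one may take $\beta_1=1$), and let $\alpha_1,\dots,\alpha_{R_k}$ be the elements remaining on the list $\frac{v^{(i)}_r+\sigma}{\ell_r}$ ($r=1,\dots,m$, $\sigma=0,\dots,\ell_r-1$) after one copy of each element $1-s_0^{(j)}/\ell_0$ with $\mathbf b_j\in\mathcal B_k$ a boundary point of $P(A)$ has been removed. Then the $R_k$ series $F^{(\mathbf b_j)}_{\mathbf b_i}(\lambda)$ with $\mathbf b_j\in\mathcal B_k$ an interior point of $P(A)$ are obtained from a full set of solutions at $x=0$ of the hypergeometric operator \[(\delta_x+\beta_1-1)\cdots(\delta_x+\beta_{R_k}-1)-x(\delta_x+\alpha_1)\cdots(\delta_x+\alpha_{R_k}),\qquad\delta_x=x\tfrac{d}{dx},\] by replacing $x$ by $\lambda^{\ell_0}$; that is, $F^{(\mathbf b_j)}_{\mathbf b_i}(\lambda)=H_j(\lambda^{\ell_0})$ where the $H_j(x)$ (formal series in $x^{s_0^{(j)}/\ell_0}\mathbb C[[x]]$) form a full set of solutions of this operator at $x=0$.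
   Context: Let $A=\{\mathbf a_1,\dots,\mathbf a_m\}\subseteq\mathbb Z^n$ be linearly independent over $\mathbb R$, $\mathbf a_0\in\mathbb Z^n$, and $\ell_0,\dots,\ell_m$ positive integers with gcd $1$, $\ell_0\mathbf a_0=\sum_{j=1}^m\ell_j\mathbf a_j$, $\ell_0=\sum_{j=1}^m\ell_j$. Let $\mathbb ZA$, $\mathbb ZA_+$ be the groups generated by $A$ and $A\cup\{\mathbf a_0\}$. Let $V$ be the real span of $A$, $V_{\mathbb Z}=V\cap\mathbb Z^n$, $P(A)=\{\sum_jc_j\mathbf a_j:0\le c_j<1\}$, $\mathcal B=V_{\mathbb Z}\cap P(A)$. Each $\mathbf b\in\mathcal B$ is written uniquely $\mathbf b=\sum_rv_r\mathbf a_r$ with $v_r\in[0,1)$; $\mathbf b$ is an interior point of $P(A)$ if all $v_r>0$ and a boundary point otherwise. Fix a coset $\mathcal C_k$ of $\mathbb ZA_+$ in $V_{\mathbb Z}$, put $\mathcal B_k=\mathcal B\cap\mathcal C_k$ (it has $\ell_0$ elements), and let $R_k$ be the number of interior points of $P(A)$ in $\mathcal B_k$. Fix $\mathbf b_i\in\mathcal B_k$. For $\mathbf b_j\in\mathcal B_k$ write $\mathbf b_j=\sum_rv^{(j)}_r\mathbf a_r$, let $s_0^{(j)}\in\{0,\dots,\ell_0-1\}$ be the unique element with $\mathbf b_i+s_0^{(j)}\mathbf a_0\equiv\mathbf b_j\pmod{\mathbb ZA}$, and let $s^{(j)}_r\in\mathbb Z$ ($r=1,\dots,m$) be determined by $\mathbf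 b_i+s_0^{(j)}\mathbf a_0=\mathbf b_j-\sum_rs^{(j)}_r\mathbf a_r$. Define \[F^{(\mathbf b_j)}_{\mathbf b_i}(\lambda)=\lambda^{s_0^{(j)}}\sum_{s=0}^\infty\frac{\prod_{r=1}^m\prod_{\sigma=0}^{\ell_r-1}\big(\frac{v^{(j)}_r-s^{(j)}_r+\sigma}{\ell_r}\big)_s}{\prod_{t=1}^{\ell_0}\big(\frac{s^{(j)}_0+t}{\ell_0}\big)_s}\lambda^{s\ell_0},\] with $(a)_s=a(a+1)\cdots(a+s-1)$. *)

(* Defs.v *)
From HB Require Import structures.
From mathcomp Require Import all_boot all_order all_algebra.
From mathcomp Require Import boolp classical_sets reals.
From mathcomp Require Import complex.
Set Implicit Arguments. Unset Strict Implicit. Unset Printing Implicit Defensive.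
Import Order.TTheory GRing.Theory Num.Theory.
Local Open Scope ring_scope.

(* Formal series at x = 0 with rational exponents: H q is the coefficient of x^q. *)
Definition series (C : Type) := rat -> C.

Section Setup.
Variable R : realType.
Local Notation C := (R[i]).
Definition toC (x : R) : C := Complex x 0.

Variables (n m : nat) (a : 'I_m -> 'rV[int]_n) (a0 : 'rV[int]_n)
          (l0 : nat) (l : 'I_m -> nat).

Definition AZ : 'M[int]_(m, n) := \matrix_(j < m, k < n) a j 0 k.
Definition AR : 'M[R]_(m, n) := map_mx (fun z : int => z%:~R) AZ.
Definition toR (v : 'rV[int]_n) : 'rV[R]_n := map_mx (fun z : int => z%:~R) v.

Definition lin_indep_R : Prop := forall c : 'rV[R]_m, c *m AR = 0 -> c = 0.

Definition in_VZ (v : 'rV[int]_n) : Prop := exists c : 'rV[R]_m, toR v = c *m AR.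
Definition in_ZA (v : 'rV[int]_n) : Prop := exists z : 'rV[int]_m, v = z *m AZ.
Definition in_ZAplus (v : 'rV[int]_n) : Prop :=
  exists (z0 : int) (z : 'rV[int]_m), v = a0 *~ z0 + z *m AZ.
Definition in_PA (x : 'rV[R]_n) : Prop :=
  exists c : 'rV[R]_m, (forall r, 0 <= c 0 r < 1) /\ x = c *m AR.
Definition in_B (v : 'rV[int]_n) : Prop := in_VZ v /\ in_PA (toR v).
Definition coords (v : 'rV[int]_n) : 'rV[R]_m :=
  xget 0 [set c : 'rV[R]_m | toR v = c *m AR].
Definition interior_pt (v : 'rV[int]_n) : Prop := forall r, 0 < coords v 0 r.
Definition boundary_pt (v : 'rV[int]_n) : Prop := ~ interior_pt v.

Variable c0 : 'rV[int]_n.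
Definition in_Ck (v : 'rV[int]_n) : Prop := in_ZAplus (v - c0).
Definition in_Bk (v : 'rV[int]_n) : Prop := in_B v /\ in_Ck v.

Variable bi : 'rV[int]_n.
Definition s0 (bj : 'rV[int]_n) : nat :=
  xget 0%N [set s : nat | (s < l0)%N /\ in_ZA (bj - (bi + a0 *+ s))].
Definition svec (bj : 'rV[int]_n) : 'rV[int]_m :=
  xget 0 [set z : 'rV[int]_m | bi + a0 *+ s0 bj = bj - z *m AZ].

Definition poch (x : C) (s : nat) : C := \prod_(k < s) (x + k%:R).

(* the coefficient of lambda^(s0 + s l0) in F^{(b_j)}_{b_i} *)
Definition Fcoef (bj : 'rV[int]_n) (s : nat) : C :=
  (\prod_(r < m) \prod_(sg < l r)
      poch ((toC (coords bj 0 r) - (svec bj 0 r)%:~R + sg%:R) / (l r)%:R) s)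
  / \prod_(t < l0) poch (((s0 bj)%:R + (t.+1)%:R) / l0%:R) s.

(* F^{(b_j)}_{b_i}(lambda) as a power series in lambda: coefficient of lambda^N *)
Definition Fser (bj : 'rV[int]_n) : nat -> C := fun N =>
  if ((s0 bj <= N)%N && (l0 %| N - s0 bj)%N)
  then Fcoef bj ((N - s0 bj) %/ l0)%N else 0.

Definition bdry_val (q : R) : bool :=
  `[< exists bj, in_Bk bj /\ boundary_pt bj /\ q = 1 - (s0 bj)%:R / l0%:R >].

Definition betas : seq R :=
  [seq q <- [seq (u%:R / l0%:R : R) | u <- iota 1 l0] | ~~ bdry_val q].

Definition alpha_list : seq R :=
  flatten [seq [seq (coords bi 0 r + sg%:R) / (l r)%:R | sg <- iota 0 (l r)]
          | r <- enum 'I_m].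
(* the set {1 - s_0^{(j)}/l0 : b_j ∈ B_k boundary}, each element listed once *)
Definition bdry_vals : seq R :=
  [seq q <- [seq (1 - t%:R / l0%:R : R) | t <- iota 0 l0] | bdry_val q].
Definition alphas : seq R := foldr (fun q s => rem q s) alpha_list bdry_vals.

End Setup.

Section Operators.
Variable R : realType.
Local Notation C := (R[i]).

(* (delta_x + c) acting on formal series: x^q |-> (q + c) x^q *)
Definition dshift (c : C) (H : series C) : series C := fun q => (ratr q + c) * H q.
Definition xmul (H : series C) : series C := fun q => H (q - 1).

Definition hyperop (bs als : seq R) (H : series C) : series C := fun q =>
  foldr (fun b G => dshift (toC b - 1) G) H bs q
  - xmul (foldr (fun a G => dshift (toC a) G) H als) q.

Definition is_solution (bs als : seq R) (H : series C) : Prop :=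
  forall q, hyperop bs als H q = 0.

Definition in_xcCx (c : rat) (H : series C) : Prop :=
  forall q, H q != 0 -> exists s : nat, q = c + s%:Q.

Definition is_subst (F : nat -> C) (l0 : nat) (H : series C) : Prop :=
  (forall N : nat, F N = H (N%:Q / l0%:Q)) /\
  (forall q, H q != 0 -> exists N : nat, q = N%:Q / l0%:Q).

Definition lin_indep_on {T : eqType} (I : T -> Prop) (H : T -> series C) : Prop :=
  forall (s : seq T) (k : T -> C), uniq s -> (forall b, b \in s -> I b) ->
    (forall q, \sum_(b <- s) k b * H b q = 0) ->
    forall b, b \in s -> k b = 0.
End Operators.

(* Main.v *)
Require Import Defs.
From HB Require Import structures.
From mathcomp Require Import all_boot all_order all_algebra.
From mathcomp Require Import boolp classical_sets reals complex.
From mathcomp Require Import ring lra zify.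
Import Order.TTheory GRing.Theory Num.Theory.
Set Implicit Arguments. Unset Strict Implicit. Unset Printing Implicit Defensive.
Local Open Scope ring_scope.

Section Pf.
Variables (R : realType) (n m : nat) (a : 'I_m -> 'rV[int]_n)
  (a0 : 'rV[int]_n) (l0 : nat) (l : 'I_m -> nat) (c0 bi : 'rV[int]_n).
Hypotheses (hind : lin_indep_R R a) (hl0 : (0 < l0)%N) (hl : forall r, (0 < l r)%N)
  (hgcd : gcdn l0 (\big[gcdn/0%N]_(r < m) l r) = 1%N)
  (ha0 : a0 *+ l0 = \sum_(r < m) a r *+ l r)
  (hsum : l0 = (\sum_(r < m) l r)%N)
  (hc0 : in_VZ R a c0) (hbi : in_Bk R a a0 c0 bi) (hint : interior_pt R a bi).

Local Notation tR := (@toR R n).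
Local Notation AR := (AR R a).
Local Notation AZ := (AZ a).
Local Notation crd := (coords R a).

Lemma tRD u v : tR (u + v) = tR u + tR v.
Proof. exact: map_mxD. Qed.
Lemma tRB u v : tR (u - v) = tR u - tR v.
Proof. exact: map_mxB. Qed.
Lemma tRMn u k : tR (u *+ k) = tR u *+ k.
Proof. elim: k => [|k IH]; first by rewrite !mulr0n /toR map_mx0. by rewrite !mulrS tRD IH. Qed.
Lemma tRM (z : 'rV[int]_m) : tR (z *m AZ) = map_mx intr z *m AR.
Proof. by rewrite /toR map_mxM. Qed.
Lemma tR_inj : injective tR.
Proof. move=> u v h; apply/rowP => k; apply: (@intr_inj R); by have := congr1 (fun w : 'rV[R]_n => w 0 k) h; rewrite /= !mxE. Qed.

Lemma indep_eq (c c' : 'rV[R]_m) : c *m AR = c' *m AR -> c = c'.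
Proof. by move=> h; apply/eqP; rewrite -subr_eq0; apply/eqP/hind; rewrite mulmxBl h subrr. Qed.

Lemma crd_spec v : in_VZ R a v -> tR v = crd v *m AR.
Proof. by move=> h; have := xgetPex 0 h. Qed.

Lemma crd_eq v c : tR v = c *m AR -> crd v = c.
Proof.
move=> h; have hv : in_VZ R a v by exists c.
by apply: indep_eq; rewrite -crd_spec.
Qed.

Definition lvec : 'rV[R]_m := \row_r ((l r)%:R / l0%:R).
Definition lz : 'rV[int]_m := \row_r (l r)%:Z.

Lemma lzE : lz *m AZ = a0 *+ l0.
Proof.
rewrite ha0 mulmx_sum_row; apply: eq_bigr => r _.
have -> : row r AZ = a r by apply/rowP => k; rewrite !mxE.
by rewrite mxE -natz scaler_nat.
Qed.

Lemma tRa0 : tR a0 = lvec *m AR.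
Proof.
have h : tR a0 *+ l0 = map_mx intr lz *m AR by rewrite -tRMn -tRM lzE.
have l0n : (l0%:R : R) != 0 by rewrite pnatr_eq0 -lt0n.
have -> : lvec = (l0%:R)^-1 *: map_mx intr lz.
  by apply/rowP => r; rewrite !mxE mulrC.
by rewrite -scalemxAl -h -scaler_nat scalerA mulVf // scale1r.
Qed.

Lemma zid (T : zmodType) (X Y W U V c : T) : X + Y + W + U + c - (W + V + c + Y) = X + (U - V).
Proof.
rewrite !opprD !addrA (addrAC _ c (-W)) (addrAC _ U (-W)) addrK.
rewrite (addrAC _ c (-V)) addrK (addrAC _ Y U) (addrAC _ Y (-V)) addrK -addrA //.
Qed.

Lemma zid2 (T : zmodType) (x y b c : T) : y - x = c - (b + x) - (c - (b + y)).
Proof. by rewrite opprB [RHS]addrC addrA subrK opprD addrA [b + y]addrC addrK. Qed.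

Lemma zid3 (T : zmodType) (W U c X F : T) : W + U + c + X - F - c = W + X + (U - F).
Proof. by rewrite (addrAC _ c X) (addrAC _ c (-F)) addrK addrA (addrAC W U X). Qed.

Lemma mulmxMnl p q (A : 'M[R]_(1, p)) (B : 'M[R]_(p, q)) k : (A *+ k) *m B = (A *m B) *+ k.
Proof. by rewrite -!scaler_nat scalemxAl. Qed.

Lemma ZA0 : in_ZA a 0. Proof. by exists 0; rewrite mul0mx. Qed.
Lemma ZAD u v : in_ZA a u -> in_ZA a v -> in_ZA a (u + v).
Proof. by move=> [z ->] [w ->]; exists (z + w); rewrite mulmxDl. Qed.
Lemma ZAN u : in_ZA a u -> in_ZA a (- u).
Proof. by move=> [z ->]; exists (- z); rewrite mulNmx. Qed.
Lemma ZAB u v : in_ZA a u -> in_ZA a v -> in_ZA a (u - v).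
Proof. by move=> hu hv; apply: ZAD => //; apply: ZAN. Qed.

Lemma ZAa0 (q : int) : in_ZA a ((a0 *+ l0) *~ q).
Proof. by rewrite -lzE; exists (q *: lz); rewrite -scalemxAl -scaler_int intz. Qed.

Lemma s0_exists bj : in_Ck a a0 c0 bj ->
  exists s : nat, (s < l0)%N /\ in_ZA a (bj - (bi + a0 *+ s)).
Proof.
case: hbi => _ [w0 [w ew]] [z0 [z ez]].
set d := (z0 - w0)%Z.
have l0z : (0 < l0%:Z)%R by rewrite ltz_nat.
have hm : (0 <= (d %% l0%:Z)%Z)%R by apply: modz_ge0; rewrite gt_eqF.
exists `|(d %% l0%:Z)%Z|%N; split.
  by rewrite -ltz_nat abszE ger0_norm // ltz_pmod.
have -> : bj - (bi + a0 *+ `|(d %% l0%:Z)%Z|%N) =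
   ((a0 *+ l0) *~ (d %/ l0%:Z)%Z) + (z - w) *m AZ.
  have e1 : bj = (bj - c0) + c0 by rewrite subrK.
  have e2 : bi = (bi - c0) + c0 by rewrite subrK.
  rewrite e1 e2 ez ew mulmxBl.
  have e3 : a0 *+ `|(d %% l0%:Z)%Z|%N = a0 *~ (d %% l0%:Z)%Z.
    by rewrite pmulrn gez0_abs.
  rewrite e3 pmulrn -mulrzA.
  have e4 : a0 *~ z0 = a0 *~ (l0%:Z * (d %/ l0%:Z)%Z) + a0 *~ (d %% l0%:Z)%Z + a0 *~ w0.
    by rewrite -!mulrzDr mulrC -divz_eq /d subrK.
  rewrite e4; set X := a0 *~ (l0%:Z * _); set Y := a0 *~ _; set W := a0 *~ w0.
  set U := z *m AZ; set V := w *m AZ.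
  exact: zid.
by apply: ZAD; [apply: ZAa0 | exists (z - w)].
Qed.

Lemma gcd_lemma d : (forall r, (l0 %| d * l r)%N) -> (l0 %| d)%N.
Proof.
move=> h.
have h1 : (l0 %| \big[gcdn/0%N]_(r < m) (d * l r))%N.
  apply: (big_ind (fun x => l0 %| x)%N) => //; first by move=> x y hx hy; rewrite dvdn_gcd hx hy.
have h2 : \big[gcdn/0%N]_(r < m) (d * l r) = (d * \big[gcdn/0%N]_(r < m) l r)%N.
  by rewrite (big_morph (muln d) (muln_gcdr d) (muln0 d)).
have : (l0 %| gcdn (d * l0) (d * \big[gcdn/0%N]_(r < m) l r))%N.
  by rewrite dvdn_gcd -h2 h1 dvdn_mull.
by rewrite -muln_gcdr hgcd muln1.
Qed.

Lemma a0_ZA s : in_ZA a (a0 *+ s) -> (l0 %| s)%N.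
Proof.
case=> z hz; apply: gcd_lemma => r.
have := congr1 tR hz; rewrite tRMn tRM tRa0 -mulmxMnl => /indep_eq/rowP/(_ r).
rewrite mulmxnE !mxE => e.
have l0n : (l0%:R : R) != 0 by rewrite pnatr_eq0 -lt0n.
have e2 : ((s * l r)%N%:R : R) = (z 0 r * l0%:Z)%:~R.
  by rewrite intrM -e -mulr_natr natrM; field.
have e3 : ((s * l r)%N%:Z) = (z 0 r * l0%:Z) by apply: (@intr_inj R); rewrite -pmulrn e2.
have : (l0%:Z %| (s * l r)%N%:Z)%Z by rewrite e3 dvdz_mull.
by rewrite dvdzE !absz_nat.
Qed.

Lemma s0_uniq bj s s' : (s < l0)%N -> (s' < l0)%N ->
  in_ZA a (bj - (bi + a0 *+ s)) -> in_ZA a (bj - (bi + a0 *+ s')) -> s = s'.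
Proof.
wlog le : s s' / (s <= s')%N.
  move=> W h1 h2 h3 h4; case: (leqP s s') => hs; first exact: W.
  by apply/esym/W => //; apply: ltnW.
move=> h1 h2 h3 h4.
have : in_ZA a (a0 *+ (s' - s)).
  have -> : a0 *+ (s' - s) = (bj - (bi + a0 *+ s)) - (bj - (bi + a0 *+ s')).
    by rewrite mulrnBr //; apply: zid2.
  exact: ZAB.
move/a0_ZA => dv.
have hlt : (s' - s < l0)%N by apply: leq_ltn_trans h2; apply: leq_subr.
have : (s' - s)%N = 0%N.
  move: dv hlt; case: (s' - s)%N => [|k] //.
  by move=> /dvdn_leq => /(_ isT) => hle hk; lia.
lia.
Qed.

Local Notation S0 := (s0 a a0 l0 bi).
Local Notation SV := (svec a a0 l0 bi).
Local Notation Bk := (in_Bk R a a0 c0).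

Lemma s0_spec bj : in_Ck a a0 c0 bj -> (S0 bj < l0)%N /\ in_ZA a (bj - (bi + a0 *+ S0 bj)).
Proof. by move=> h; exact: (@xgetPex _ 0%N [set s : nat | (s < l0)%N /\ in_ZA a (bj - (bi + a0 *+ s))] (@s0_exists bj h)). Qed.

Lemma s0_eq bj s : in_Ck a a0 c0 bj -> (s < l0)%N -> in_ZA a (bj - (bi + a0 *+ s)) -> S0 bj = s.
Proof. by move=> h hs hz; case: (s0_spec h) => h1 h2; apply: (s0_uniq h1 hs h2 hz). Qed.

Lemma svec_spec bj : in_Ck a a0 c0 bj -> bi + a0 *+ S0 bj = bj - SV bj *m AZ.
Proof.
move=> h; case: (s0_spec h) => _ [z hz].
have ex : exists z, bi + a0 *+ S0 bj = bj - z *m AZ by exists z; rewrite -hz opprB [RHS]addrC subrK.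
exact: (@xgetPex _ 0 [set z : 'rV[int]_m | bi + a0 *+ S0 bj = bj - z *m AZ] ex).
Qed.

Lemma Bk_VZ bj : Bk bj -> in_VZ R a bj. Proof. by case=> [[]]. Qed.
Lemma Bk_Ck bj : Bk bj -> in_Ck a a0 c0 bj. Proof. by case. Qed.

Lemma crd_rel bj : Bk bj -> crd bj = crd bi + lvec *+ S0 bj + map_mx intr (SV bj).
Proof.
move=> h; apply: crd_eq.
have e : bj = bi + a0 *+ S0 bj + SV bj *m AZ by rewrite svec_spec ?subrK //; exact: Bk_Ck.
rewrite {1}e !tRD tRMn tRM tRa0 (crd_spec (Bk_VZ hbi)) !mulmxDl mulmxMnl //.
Qed.

Lemma crd_range bj : Bk bj -> forall r, 0 <= crd bj 0 r < 1.
Proof.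
case=> [[_ [c [hc e]]] _] r.
by rewrite (crd_eq e); apply: hc.
Qed.

Lemma int_small (k : int) : -1 < (k%:~R : R) < 1 -> k = 0.
Proof.
case/andP => h1 h2.
have h1' : (-1 < k)%R by rewrite -(ltr_int R) mulrNz.
have h2' : (k < 1)%R by rewrite -(ltrz1 R).
lia.
Qed.

Lemma s0_inj bj bj' : Bk bj -> Bk bj' -> S0 bj = S0 bj' -> bj = bj'.
Proof.
move=> h h' e; apply: tR_inj.
rewrite (crd_spec (Bk_VZ h)) (crd_spec (Bk_VZ h')); congr (_ *m _).
apply/rowP => r.
have := congr1 (fun w : 'rV[R]_m => w 0 r) (crd_rel h).
have := congr1 (fun w : 'rV[R]_m => w 0 r) (crd_rel h').
rewrite /= !mxE e => e1 e2.
have d : crd bj 0 r - crd bj' 0 r = (SV bj 0 r - SV bj' 0 r)%:~R.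
  by rewrite e1 e2 intrB; lra.
have := crd_range h r; have := crd_range h' r.
move=> /andP[a1 a2] /andP[b1 b2].
have : SV bj 0 r - SV bj' 0 r = 0.
  by apply: int_small; rewrite -d; apply/andP; split; lra.
move/eqP; rewrite subr_eq0 => /eqP e3.
by rewrite e1 e2 e3.
Qed.

Lemma pt_exists t : (t < l0)%N -> exists bj, Bk bj /\ S0 bj = t.
Proof.
move=> ht.
set x := crd bi + lvec *+ t.
set fl : 'rV[int]_m := \row_r Num.floor (x 0 r).
set bj := bi + a0 *+ t - fl *m AZ.
have tbj : tR bj = (x - map_mx intr fl) *m AR.
  rewrite /bj tRB tRD tRMn tRM tRa0 (crd_spec (Bk_VZ hbi)) mulmxBl mulmxDl mulmxMnl //.
have ck : in_Ck a a0 c0 bj.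
  case: hbi => _ [w0 [w ew]].
  exists (w0 + t%:Z), (w - fl).
  rewrite /bj mulmxBl mulrzDr -pmulrn -[bi](subrK c0) ew.
  exact: zid3.
have bk : Bk bj.
  split=> //; split; first by exists (x - map_mx intr fl).
  exists (x - map_mx intr fl); split=> // r.
  have := floor_itv (x 0 r); case/andP => f1 f2.
  rewrite intrD in f2; move: f1 f2; rewrite !mxE => f1 f2; apply/andP; split; lra.
exists bj; split=> //.
apply: s0_eq => //.
have -> : bj - (bi + a0 *+ t) = - (fl *m AZ) by rewrite /bj addrAC subrr add0r.
by apply: ZAN; exists fl.
Qed.

Local Notation C := (R[i]).
Local Notation FC := (Fcoef R a a0 l0 l bi).
Local Notation FS := (Fser R a a0 l0 l bi).

Lemma toCE (x : R) : toC x = real_complex R x. Proof. by []. Qed.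

Lemma toC_div (x y : R) : toC (x / y) = toC x / toC y.
Proof. by rewrite !toCE (fmorph_div (real_complex R)). Qed.
Lemma toC_add (x y : R) : toC (x + y) = toC x + toC y.
Proof. by rewrite !toCE (rmorphD (real_complex R)). Qed.
Lemma toC_sub (x y : R) : toC (x - y) = toC x - toC y.
Proof. by rewrite !toCE (rmorphB (real_complex R)). Qed.
Lemma toC_nat (k : nat) : toC (k%:R : R) = k%:R.
Proof. by rewrite !toCE (rmorph_nat (real_complex R)). Qed.
Lemma toC_int (k : int) : toC (k%:~R : R) = k%:~R.
Proof. by rewrite !toCE (rmorph_int (real_complex R)). Qed.
Lemma toC_1 : toC (1 : R) = 1.
Proof. by rewrite !toCE (rmorph1 (real_complex R)). Qed.
Lemma toC_mulrn (x : R) k : toC (x *+ k) = toC x *+ k.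
Proof. by rewrite !toCE (rmorphMn (real_complex R)). Qed.

Lemma l0C : (l0%:R : C) != 0. Proof. by rewrite pnatr_eq0 -lt0n. Qed.
Lemma l0Q : (l0%:Q : rat) != 0. Proof. by rewrite pnatr_eq0 -lt0n. Qed.
Lemma l0R : (l0%:R : R) != 0. Proof. by rewrite pnatr_eq0 -lt0n. Qed.

Lemma poch0 (x : C) : poch x 0 = 1. Proof. by rewrite /poch big_ord0. Qed.
Lemma pochS (x : C) s : poch x s.+1 = poch x s * (x + s%:R). Proof. by rewrite /poch big_ord_recr. Qed.

Lemma FC0 bj : FC bj 0 = 1.
Proof.
rewrite /Fcoef big1 ?big1 ?divr1 // => [t _|r _]; first by rewrite poch0.
by rewrite big1 // => sg _; rewrite poch0.
Qed.

Lemma Ypos bj k (t : 'I_l0) : ((S0 bj)%:R + (t.+1)%:R) / l0%:R + k%:R != 0 :> C.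
Proof.
have -> : ((S0 bj)%:R + (t.+1)%:R) / l0%:R + k%:R = ((S0 bj + t.+1 + k * l0)%N)%:R / l0%:R :> C.
  rewrite !natrD natrM; move: (t.+1%:R : C) => T; field; exact: l0C.
apply: mulf_neq0; last by rewrite invr_eq0 l0C.
by rewrite pnatr_eq0; lia.
Qed.

Lemma pochY bj k (t : 'I_l0) : poch (((S0 bj)%:R + (t.+1)%:R) / l0%:R) k != 0 :> C.
Proof. by rewrite /poch prodf_seq_neq0; apply/allP => i _ /=; apply: Ypos. Qed.

Lemma FC_rec bj k :
  FC bj k.+1 * \prod_(t < l0) (((S0 bj)%:R + (t.+1)%:R) / l0%:R + k%:R) =
  FC bj k * \prod_(r < m) \prod_(sg < l r)
     ((toC (crd bj 0 r) - (SV bj 0 r)%:~R + sg%:R) / (l r)%:R + k%:R).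
Proof.
rewrite /Fcoef.
under eq_bigr => r _ do under eq_bigr => sg _ do rewrite pochS.
under [X in _ / X]eq_bigr => t _ do rewrite pochS.
under eq_bigr => r _ do rewrite big_split /=.
rewrite !big_split /=.
set N := \prod_(r < m) _; set P1 := \prod_(r < m) _.
set D := \prod_(t < l0) _; set P2 := \prod_(t < l0) _.
have hD : D != 0 by rewrite prodf_seq_neq0; apply/allP => i _ /=; apply: pochY.
have hP : P2 != 0 by rewrite prodf_seq_neq0; apply/allP => i _ /=; apply: Ypos.
by field; rewrite hD hP.
Qed.

Lemma natdiv_inj (F : numFieldType) A B : (A%:R / l0%:R : F) = B%:R / l0%:R -> A = B.
Proof.
have h0 : (l0%:R : F) != 0 by rewrite pnatr_eq0 -lt0n.
move/(congr1 (fun x => x * l0%:R)); rewrite !divfK // => /eqP.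
by rewrite eqr_nat => /eqP.
Qed.

Lemma ratN_inj (A B : nat) : A%:Q / l0%:Q = B%:Q / l0%:Q -> A = B.
Proof. rewrite -!pmulrn; exact: natdiv_inj. Qed.

Lemma addq_form (B j : nat) : B%:Q / l0%:Q + j%:Q = ((B + j * l0)%N)%:Q / l0%:Q.
Proof. by rewrite PoszD PoszM intrD intrM; field; exact: l0Q. Qed.

Definition Hs (bj : 'rV[int]_n) : series C := fun q =>
  if `[< exists N : nat, q = N%:Q / l0%:Q >]
  then FS bj (xget 0%N [set N : nat | q = N%:Q / l0%:Q]) else 0.

Lemma Hs_nat bj (N : nat) : Hs bj (N%:Q / l0%:Q) = FS bj N.
Proof.
have ex : exists N' : nat, N%:Q / l0%:Q = N'%:Q / l0%:Q by exists N.
rewrite /Hs asboolT //.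
have := @xgetPex _ 0%N [set N' : nat | N%:Q / l0%:Q = N'%:Q / l0%:Q] ex.
by move=> /= /ratN_inj <-.
Qed.

Lemma Hs_at bj (k : nat) : Hs bj (((S0 bj + k * l0)%N)%:Q / l0%:Q) = FC bj k.
Proof.
rewrite Hs_nat /Fser leq_addr addKn dvdn_mull //= mulnK //.
Qed.

Lemma Hs_supp bj q : Hs bj q != 0 ->
  exists k, q = ((S0 bj + k * l0)%N)%:Q / l0%:Q.
Proof.
rewrite /Hs; case: asboolP => [ex|]; last by rewrite eqxx.
have := @xgetPex _ 0%N [set N : nat | q = N%:Q / l0%:Q] ex.
set N := xget _ _ => /= eN.
rewrite /Fser; case: ifP => [/andP[h1 h2]|]; last by rewrite eqxx.
move=> _; exists ((N - S0 bj) %/ l0)%N.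
by rewrite divnK // subnKC.
Qed.

Lemma ratr_form (A : nat) : ratr (A%:Q / l0%:Q) = A%:R / l0%:R :> C.
Proof. by rewrite fmorph_div !rmorph_nat. Qed.

Lemma foldr_dshift (f : R -> C) (bs : seq R) (H : series C) q :
  foldr (fun b G => dshift (f b) G) H bs q = (\prod_(b <- bs) (ratr q + f b)) * H q.
Proof.
elim: bs => [|b bs IH] /=; first by rewrite big_nil mul1r.
by rewrite /dshift IH big_cons mulrA.
Qed.

Local Notation bval := (bdry_val a a0 l0 c0 bi).
Local Notation BETAS := (betas R a a0 l0 c0 bi).
Local Notation ALPHAS := (alphas R a a0 l0 l c0 bi).
Local Notation ALIST := (alpha_list R a l bi).
Local Notation BVALS := (bdry_vals R a a0 l0 c0 bi).

Definition fB (u : nat) : R := u%:R / l0%:R.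
Definition fP (t : nat) : R := 1 - t%:R / l0%:R.
Definition Lbeta := [seq fB u | u <- iota 1 l0].
Definition Lbd := [seq fP t | t <- iota 0 l0].

Lemma fB_fP t : (t <= l0)%N -> fB (l0 - t) = fP t.
Proof. by move=> h; rewrite /fB /fP natrB //; field; exact: l0R. Qed.

Lemma perm_L : perm_eq Lbeta Lbd.
Proof.
apply: uniq_perm.
- rewrite map_inj_uniq ?iota_uniq // => u v; exact: natdiv_inj.
- rewrite map_inj_uniq ?iota_uniq // => u v; rewrite /fP => e.
  apply: natdiv_inj; apply: oppr_inj; apply: (addrI 1); exact: e.
move=> x; apply/mapP/mapP => [[u hu ->]|[t ht ->]].
- move: hu; rewrite mem_iota => /andP[h1 h2].
  exists (l0 - u)%N; first by rewrite mem_iota; lia.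
  by rewrite -fB_fP ?subKn //; lia.
- move: ht; rewrite mem_iota => /andP[h1 h2].
  exists (l0 - t)%N; first by rewrite mem_iota; lia.
  by rewrite fB_fP //; lia.
Qed.

Definition Dq (q : rat) : C := \prod_(b <- Lbeta | bval b) (ratr q + (toC b - 1)).

Lemma SB q : \prod_(b <- Lbeta) (ratr q + (toC b - 1)) =
  (\prod_(b <- BETAS) (ratr q + (toC b - 1))) * Dq q.
Proof. by rewrite (bigID bval) /= mulrC /betas big_filter. Qed.

Lemma SD q : \prod_(b <- BVALS) (ratr (q - 1) + toC b) = Dq q.
Proof.
rewrite /bdry_vals big_filter /Dq (perm_big _ perm_L) /=.
apply: eq_bigr => b _; rewrite rmorphB rmorph1 /=; ring.
Qed.

Lemma perm_rems (T : eqType) (s r : seq T) : uniq r -> {subset r <= s} ->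
  perm_eq s (r ++ foldr (fun q s => rem q s) s r).
Proof.
elim: r => [|x r IH] /=; first by rewrite perm_refl.
case/andP => xr ur sub.
have p : perm_eq s (r ++ foldr (fun q s => rem q s) s r).
  by apply: IH => // y hy; apply: sub; rewrite inE hy orbT.
set s' := foldr _ s r in p *.
have xs' : x \in s'.
  have : x \in s by apply: sub; rewrite inE eqxx.
  by rewrite (perm_mem p) mem_cat (negbTE xr).
apply: (perm_trans p).
rewrite perm_sym -cat1s perm_catCA perm_cat2l perm_sym.
exact: perm_to_rem.
Qed.

Definition pt (t : nat) : 'rV[int]_n := xget 0 [set bj | Bk bj /\ S0 bj = t].

Lemma pt_spec t : (t < l0)%N -> Bk (pt t) /\ S0 (pt t) = t.
Proof. by move=> h; exact: (@xgetPex _ 0 [set bj | Bk bj /\ S0 bj = t] (pt_exists h)). Qed.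

Lemma S0_lt bj : Bk bj -> (S0 bj < l0)%N.
Proof. by move=> h; case: (s0_spec (Bk_Ck h)). Qed.

Lemma pt_S0 bj : Bk bj -> pt (S0 bj) = bj.
Proof. by move=> h; case: (pt_spec (S0_lt h)) => h1 h2; apply: s0_inj. Qed.

Lemma bval_fP t : (t < l0)%N -> bval (fP t) = ~~ `[< interior_pt R a (pt t) >].
Proof.
move=> ht; case: (pt_spec ht) => hp1 hp2.
apply/asboolP/negP => [[bj [hb [hbd e]]] /asboolP hi|hni].
- have et : t = S0 bj.
    apply: (@natdiv_inj R); apply: oppr_inj; apply: (addrI 1); exact: e.
  by apply: hbd; rewrite -(pt_S0 hb) -et.
- exists (pt t); split=> //; split; first by move=> hi; apply: hni; apply/asboolP.
  by rewrite hp2.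
Qed.

Lemma mulnr_lt (L Z S : R) : 0 < L -> 0 < Z -> S < Z -> L / Z * S < L.
Proof.
move=> hL hZ hS.
have hu : 0 < L / Z by rewrite divr_gt0.
have : L / Z * S < L / Z * Z by rewrite ltr_pM2l.
by rewrite divfK // gt_eqF.
Qed.

Lemma alpha_mem bj : Bk bj -> boundary_pt R a bj -> 1 - (S0 bj)%:R / l0%:R \in ALIST.
Proof.
move=> hb hbd.
have [r hr] : exists r, ~ 0 < crd bj 0 r by apply/existsNP; exact: hbd.
have cz : crd bj 0 r = 0.
  case/andP: (crd_range hb r) => h1 _; move: h1; rewrite le_eqVlt => /orP[/eqP <-|h] //.
have rel := congr1 (fun w : 'rV[R]_m => w 0 r) (crd_rel hb).
move: rel; rewrite /= !mxE mulmxnE !mxE cz => rel; rewrite -mulr_natr in rel.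
set ci := crd bi 0 r in rel *; set z := SV bj 0 r in rel *.
have hci : 0 < ci < 1 by rewrite hint; case/andP: (crd_range hbi r).
have hlr : (0 : R) < (l r)%:R by rewrite ltr0n.
have hl0r : (0 : R) < l0%:R by rewrite ltr0n.
have hSl : ((S0 bj)%:R : R) < l0%:R by rewrite ltr_nat; apply: S0_lt.
have hS0 : (0 : R) <= (S0 bj)%:R by rewrite ler0n.
have w1 := mulnr_lt hlr hl0r hSl.
have w0 : 0 <= (l r)%:R / l0%:R * (S0 bj)%:R :> R by rewrite mulr_ge0 // divr_ge0 // ler0n.
have ez : (z%:~R : R) = - (ci + (l r)%:R / l0%:R * (S0 bj)%:R).
  lra.
have zneg : (z < 0)%R by rewrite -(ltrz0 R) ez; case/andP: hci => ? ?; lra.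
have zlow : (- ((l r)%:Z) - 1 < z)%R.
  rewrite -(ltr_int R) ez intrB mulrNz pmulrn; case/andP: hci => ? ?; lra.
have hs : (0 <= (l r)%:Z + z)%R by lia.
apply/flattenP; exists [seq (ci + sg%:R) / (l r)%:R | sg <- iota 0 (l r)].
  by apply/mapP; exists r; rewrite ?mem_enum.
apply/mapP; exists `|((l r)%:Z + z)%R|%N.
  rewrite mem_iota add0n /=; lia.
have e1 : (`|((l r)%:Z + z)%R|%N%:R : R) = (l r)%:R + z%:~R.
  by rewrite pmulrn gez0_abs // intrD -pmulrn.
rewrite e1 ez; field.
by rewrite !pnatr_eq0 -!lt0n hl hl0.
Qed.

Lemma sub_alpha : {subset BVALS <= ALIST}.
Proof.
move=> x; rewrite /bdry_vals mem_filter => /andP[/asboolP [bj [hb [hbd ->]]] _].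
exact: alpha_mem.
Qed.

Lemma uniq_BVALS : uniq BVALS.
Proof.
rewrite filter_uniq // map_inj_uniq ?iota_uniq // => u v e.
by apply: natdiv_inj; apply: oppr_inj; apply: (addrI 1); exact: e.
Qed.

Lemma perm_alpha : perm_eq ALIST (BVALS ++ ALPHAS).
Proof. exact: perm_rems uniq_BVALS sub_alpha. Qed.

Lemma SA p : \prod_(b <- ALIST) (ratr p + toC b) =
  (\prod_(b <- ALPHAS) (ratr p + toC b)) * \prod_(b <- BVALS) (ratr p + toC b).
Proof. by rewrite (perm_big _ perm_alpha) big_cat /= mulrC. Qed.

Lemma iota1 : iota 1 l0 = [seq (1 + i)%N | i <- iota 0 l0].
Proof. by rewrite -iotaDl. Qed.
Lemma iota0 k : iota 0 k = index_iota 0 k.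
Proof. by rewrite /index_iota subn0. Qed.

Lemma PB_conv bj k :
  \prod_(b <- Lbeta) (ratr (((S0 bj + k.+1 * l0)%N)%:Q / l0%:Q) + (toC b - 1)) =
  \prod_(t < l0) (((S0 bj)%:R + (t.+1)%:R) / l0%:R + k%:R) :> C.
Proof.
rewrite /Lbeta big_map iota1 big_map iota0 big_mkord.
apply: eq_bigr => t _.
rewrite ratr_form /fB toCE fmorph_div !rmorph_nat add1n mulSn !natrD natrM.
move: (t.+1%:R : C) => T; field; exact: l0C.
Qed.

Lemma PA_conv bj k : Bk bj ->
  \prod_(b <- ALIST) (ratr (((S0 bj + k * l0)%N)%:Q / l0%:Q) + toC b) =
  \prod_(r < m) \prod_(sg < l r)
     ((toC (crd bj 0 r) - (SV bj 0 r)%:~R + sg%:R) / (l r)%:R + k%:R) :> C.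
Proof.
move=> hb.
rewrite /alpha_list big_flatten big_map big_enum /=.
apply: eq_bigr => r _.
rewrite big_map iota0 big_mkord; apply: eq_bigr => sg _.
have rel := congr1 (fun w : 'rV[R]_m => w 0 r) (crd_rel hb).
move: rel; rewrite /= !mxE mulmxnE !mxE => rel.
rewrite rel ratr_form !(toC_div, toC_add, toC_nat, toC_int, toC_mulrn).
set cc := toC (crd bi 0 r).
rewrite -mulr_natr !natrD natrM; field.
by rewrite !pnatr_eq0 -!lt0n hl hl0.
Qed.

Definition inform bj (q : rat) := exists k : nat, q = ((S0 bj + k * l0)%N)%:Q / l0%:Q.

Lemma shift_form bj (k : nat) :
  ((S0 bj + k.+1 * l0)%N)%:Q / l0%:Q - 1 = ((S0 bj + k * l0)%N)%:Q / l0%:Q.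
Proof.
have -> : (S0 bj + k.+1 * l0 = (S0 bj + k * l0) + 1 * l0)%N by rewrite mulSn mul1n; lia.
by rewrite -addq_form addrK.
Qed.

Lemma Hs_zero bj q : ~ inform bj q -> Hs bj q = 0 /\ Hs bj (q - 1) = 0.
Proof.
move=> nq; split; apply/eqP; apply/negPn/negP => /Hs_supp [k ek]; apply: nq.
  by exists k.
exists k.+1; by rewrite -[q](subrK 1) ek -shift_form subrK.
Qed.

Lemma FULL bj q : Bk bj ->
  (\prod_(b <- Lbeta) (ratr q + (toC b - 1))) * Hs bj q =
  (\prod_(b <- ALIST) (ratr (q - 1) + toC b)) * Hs bj (q - 1).
Proof.
move=> hb.
case: (pselect (inform bj q)) => [[k ->]|nq]; last first.
  by case: (Hs_zero nq) => -> ->; rewrite !mulr0.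
case: k => [|k].
- have h1 : Hs bj (((S0 bj + 0 * l0)%N)%:Q / l0%:Q - 1) = 0.
    apply/eqP; apply/negPn/negP => /Hs_supp [k' e].
    have := congr1 (fun x => x + 1) e; rewrite subrK /= (addq_form _ 1) => /ratN_inj.
    lia.
  rewrite h1 mulr0; apply/eqP; rewrite mulf_eq0; apply/orP; left.
  rewrite prodf_seq_eq0; apply/hasP; exists (fB (l0 - S0 bj)).
    by apply: map_f; rewrite mem_iota; have := S0_lt hb; lia.
  rewrite /= ratr_form /fB toC_div !toC_nat mul0n addn0 natrB; last first.
    by apply: ltnW; apply: S0_lt.
  apply/eqP; field; exact: l0C.
- by rewrite shift_form !Hs_at PB_conv PA_conv // mulrC FC_rec mulrC.
Qed.

Lemma Dq_neq0 bj k : Bk bj -> interior_pt R a bj ->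
  Dq (((S0 bj + k * l0)%N)%:Q / l0%:Q) != 0.
Proof.
move=> hb hi.
rewrite /Dq prodf_seq_neq0; apply/allP => b hbm; apply/implyP => /asboolP [bj' [hb' [hbd' e]]].
rewrite e ratr_form toC_sub toC_1 toC_div !toC_nat.
apply/negP => /eqP h.
have h' : ((S0 bj + k * l0)%N%:R / l0%:R : C) = (S0 bj')%:R / l0%:R.
  apply/eqP; rewrite -subr_eq0; apply/eqP; rewrite -h; ring.
move/natdiv_inj: h' => h''.
have hlt := S0_lt hb'.
have ek : S0 bj = S0 bj'.
  by clear h; move: h''; case: k => [|k]; rewrite ?mulSn; lia.
by apply: hbd'; rewrite -(s0_inj hb hb' ek).
Qed.

Lemma SOL bj : Bk bj -> interior_pt R a bj -> is_solution BETAS ALPHAS (Hs bj).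
Proof.
move=> hb hi q.
rewrite /hyperop /xmul (foldr_dshift (fun b => toC b - 1)) (foldr_dshift (@toC R)).
have := FULL q hb; rewrite SB SA SD.
case: (pselect (inform bj q)) => [[k ek]|nq]; last first.
  by case: (Hs_zero nq) => -> -> _; rewrite !mulr0 subrr.
have hD : Dq q != 0 by rewrite ek; apply: Dq_neq0.
move=> e; apply/eqP; rewrite subr_eq0; apply/eqP; apply: (mulIf hD).
by rewrite mulrAC e mulrAC.
Qed.

Lemma LIN : lin_indep_on (fun bj => Bk bj /\ interior_pt R a bj) Hs.
Proof.
move=> s k us hs hsm b hb.
have [hbk hbi'] := hs b hb.
have := hsm ((S0 b)%:Q / l0%:Q).
rewrite (bigD1_seq b) //= big1_seq.
  have -> : (S0 b)%:Q / l0%:Q = ((S0 b + 0 * l0)%N)%:Q / l0%:Q by rewrite mul0n addn0.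
  by rewrite Hs_at FC0 mulr1 addr0.
move=> b' /andP[nb hb'm].
have [hb'k _] := hs b' hb'm.
suff -> : Hs b' ((S0 b)%:Q / l0%:Q) = 0 by rewrite mulr0.
apply/eqP; apply/negPn/negP => /Hs_supp [k' e].
have e2 : (S0 b + 0 * l0)%N = (S0 b' + k' * l0)%N.
  by apply: ratN_inj; rewrite mul0n addn0.
have hlt := S0_lt hbk.
have ek : S0 b' = S0 b by clear e; move: e2; case: k' => [|k']; rewrite ?mulSn; lia.
by move: nb; rewrite (s0_inj hb'k hbk ek) eqxx.
Qed.

Definition intb t := `[< interior_pt R a (pt t) >].

Lemma size_ALIST : size ALIST = l0.
Proof.
rewrite /alpha_list size_flatten sumnE /shape -map_comp big_map big_enum /=.
by rewrite hsum; apply: eq_bigr => r _; rewrite size_map size_iota.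
Qed.

Lemma main :
  exists H : 'rV[int]_n -> series (R[i]),
    (forall bj, Bk bj -> interior_pt R a bj ->
       in_xcCx ((S0 bj)%:Q / l0%:Q) (H bj) /\
       is_subst (FS bj) l0 (H bj) /\
       is_solution BETAS ALPHAS (H bj)) /\
    lin_indep_on (fun bj => Bk bj /\ interior_pt R a bj) H /\
    (exists s : seq 'rV[int]_n,
       uniq s /\ (forall bj, bj \in s <-> Bk bj /\ interior_pt R a bj) /\
       size BETAS = size s /\
       size ALPHAS = size s).
Proof.
exists Hs; split; [|split; first exact: LIN].
  move=> bj hb hi; split; [|split; last exact: SOL].
    by move=> q /Hs_supp [k ->]; exists k; rewrite addq_form.
  split; first by move=> N; rewrite Hs_nat.
  by move=> q /Hs_supp [k ->]; exists (S0 bj + k * l0)%N.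
exists [seq pt t | t <- iota 0 l0 & intb t].
have cnt1 : size [seq pt t | t <- iota 0 l0 & intb t] = count intb (iota 0 l0).
  by rewrite size_map size_filter.
have cnt2 : size BVALS = count (predC intb) (iota 0 l0).
  rewrite /bdry_vals size_filter count_map; apply: eq_in_count => t.
  by rewrite mem_iota add0n /= => ht; exact: (bval_fP ht).
have cnt3 := count_predC intb (iota 0 l0); rewrite size_iota in cnt3.
split.
  rewrite map_inj_in_uniq ?filter_uniq ?iota_uniq // => t t'.
  rewrite !mem_filter !mem_iota /= => /andP[_ ht] /andP[_ ht'] e.
  by case: (pt_spec ht) => _ <-; case: (pt_spec ht') => _ <-; rewrite e.
split.
  move=> bj; split.
    case/mapP => t; rewrite mem_filter mem_iota /= => /andP[/asboolP hi ht] ->.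
    by split => //; case: (pt_spec ht).
  case=> hb hi; apply/mapP; exists (S0 bj); last by rewrite pt_S0.
  rewrite mem_filter mem_iota /= S0_lt // andbT /intb pt_S0 //.
  exact/asboolP.
split.
  have p := perm_L.
  have c1 : count bval Lbeta = size BVALS.
    by rewrite (permP p) /bdry_vals size_filter.
  have c2 := count_predC bval Lbeta.
  rewrite /Lbeta size_map size_iota -/Lbeta in c2.
  rewrite /betas size_filter -/Lbeta.
  have -> : count (fun q => ~~ bval q) Lbeta = count (predC bval) Lbeta by [].
  rewrite cnt1; apply/eqP; rewrite -(eqn_add2l (count bval Lbeta)) c2 c1 cnt2 addnC cnt3 //.
have := perm_size perm_alpha; rewrite size_ALIST size_cat => e.
rewrite cnt1; apply/eqP; rewrite -(eqn_add2l (size BVALS)) -e cnt2 addnC cnt3 //.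
Qed.

End Pf.

Unset Implicit Arguments.

Theorem theorem6p17 (R : realType) (n m : nat) (a : 'I_m -> 'rV[int]_n)
  (a0 : 'rV[int]_n) (l0 : nat) (l : 'I_m -> nat) (c0 bi : 'rV[int]_n) :
  lin_indep_R R a ->
  (0 < l0)%N -> (forall r, 0 < l r)%N ->
  gcdn l0 (\big[gcdn/0%N]_(r < m) l r) = 1%N ->
  a0 *+ l0 = \sum_(r < m) a r *+ l r ->
  l0 = (\sum_(r < m) l r)%N ->
  in_VZ R a c0 ->
  in_Bk R a a0 c0 bi ->
  interior_pt R a bi ->
  exists H : 'rV[int]_n -> series (R[i]),
    (forall bj, in_Bk R a a0 c0 bj -> interior_pt R a bj ->
       in_xcCx ((s0 a a0 l0 bi bj)%:Q / l0%:Q) (H bj) /\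
       is_subst (Fser R a a0 l0 l bi bj) l0 (H bj) /\
       is_solution (betas R a a0 l0 c0 bi) (alphas R a a0 l0 l c0 bi) (H bj)) /\
    lin_indep_on (fun bj => in_Bk R a a0 c0 bj /\ interior_pt R a bj) H /\
    (exists s : seq 'rV[int]_n,
       uniq s /\ (forall bj, bj \in s <-> in_Bk R a a0 c0 bj /\ interior_pt R a bj) /\
       size (betas R a a0 l0 c0 bi) = size s /\
       size (alphas R a a0 l0 l c0 bi) = size s).
Proof. move=> *; apply: main; assumption. Qed.
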